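(* For every integer $r\ge 1$ and every $\xi\in\mathbb{R}$, \[ \lim_{n\to\infty}\frac{1}{n}\log \mathbb{E}\left[\exp(\xi S_{r+1,n})\right]=\varphi^{r}(\xi), \] where $\varphi^r=\varphi\circ\cdots\circ\varphi$ denotes the $r$-fold composition of $\varphi(\xi)=\frac{\xi}{4}+\log\cosh\frac{\xi}{4}$, and $\mathbb{E}$ is expectation under the uniform probability measure on $\Omega_n$.
   Context: Let $\Omega_n$ be the set of rooted, planar, full binary trees with $n$ leaves (every node has $0$ or $2$ children, and the two children of each node are distinguished as left and right); $|\Omega_n|=\frac{(2n-2)!}{n!(n-1)!}$. The random binary tree model is $\Omega_n$ with the uniform probability measure. Strahler ordering: leaves have order 1; an internal node whose two children have different orders $r_1\neq r_2$ has order $\max\{r_1,r_2\}$; an internal node whose two children both have order $r$ has order $r+1$. A branch of order $r$ is a maximal connected path all of whose nodes have order $r$. For $\tau\in\Omega_n$, $S_{r,n}(\tau)$ is the number of branches of order $r$ in $\tau$; it is a random variable on the random model. *)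

(* Defs.v *)
From Stdlib Require Import Reals Arith List.
Import ListNotations.
Open Scope R_scope.

Inductive tree : Type :=
| Leaf : tree
| Node : tree -> tree -> tree.

Fixpoint leaves (t : tree) : nat :=
  match t with
  | Leaf => 1
  | Node a b => leaves a + leaves b
  end.

(** Generator with fuel: all trees with exactly n leaves (fuel >= n suffices). *)
Fixpoint gen_trees (fuel n : nat) : list tree :=
  match fuel with
  | O => []
  | S f =>
      if Nat.eqb n 1 then [Leaf]
      else flat_map (fun k =>
             flat_map (fun a => map (fun b => Node a b) (gen_trees f (n - k)))
                      (gen_trees f k))
           (seq 1 (n - 1))
  end.

Definition Omega (n : nat) : list tree := gen_trees n n.

Fixpoint strahler (t : tree) : nat :=
  match t with
  | Leaf => 1
  | Node a b =>
      let ra := strahler a in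
      let rb := strahler b in
      if Nat.eqb ra rb then S ra else Nat.max ra rb
  end.

Definition ind (b : bool) : nat := if b then 1%nat else 0%nat.

(** Number of non-root nodes of order r in t whose parent has order <> r,
    i.e. tops of order-r branches that are not the root of t. *)
Fixpoint inner_tops (r : nat) (t : tree) : nat :=
  match t with
  | Leaf => 0
  | Node a b =>
      let p := strahler t in
      inner_tops r a + inner_tops r b
      + ind (Nat.eqb (strahler a) r && negb (Nat.eqb p r))
      + ind (Nat.eqb (strahler b) r && negb (Nat.eqb p r))
  end.

(** Order-r nodes form vertical
    chains (a node of order r has at most one child of order r), and each
    maximal chain (branch) has a unique top node: an order-r node that is
    the root or whose parent has order different from r. *)
Definition branches (r : nat) (t : tree) : nat :=
  inner_tops r t + ind (Nat.eqb (strahler t) r).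

Definition expect_exp (xi : R) (r n : nat) : R :=
  fold_right Rplus 0 (map (fun t => exp (xi * INR (branches r t))) (Omega n))
  / INR (length (Omega n)).

Definition phi (x : R) : R := x / 4 + ln (cosh (x / 4)).

Example omega_sizes :
  map (fun n => length (Omega n)) [1;2;3;4;5]%nat = [1;1;2;5;14]%nat.
Proof. reflexivity. Qed.

Example omega_leaves : forallb (fun t => Nat.eqb (leaves t) 5) (Omega 5) = true.
Proof. reflexivity. Qed.

Example branches_ex :
  let t := Node (Node Leaf Leaf) (Node (Node Leaf Leaf) Leaf) in
  (branches 1 t, branches 2 t, branches 3 t) = (5%nat, 2%nat, 1%nat).
Proof. reflexivity. Qed.

(* Main.v *)
Require Import Defs.
From Stdlib Require Import Reals Arith List Lia Lra Permutation.
Import ListNotations.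
Open Scope R_scope.

Open Scope R_scope.

Lemma NoDup_flat_map_gen {A B : Type} (f : A -> list B) (l : list A) :
  NoDup l -> (forall x, In x l -> NoDup (f x)) ->
  (forall x y z, In x l -> In y l -> In z (f x) -> In z (f y) -> x = y) ->
  NoDup (flat_map f l).
Proof.
  induction l as [|a l IH]; simpl; intros Hl Hf Hd; [constructor|].
  inversion Hl; subst.
  apply NoDup_app.
  - apply Hf; auto.
  - apply IH; auto. intros x y z Hx Hy; apply Hd; auto.
  - intros z Hz1 Hz2. apply in_flat_map in Hz2 as [y [Hy Hzy]].
    assert (a = y) by (apply (Hd a y z); auto). subst. contradiction.
Qed.

Definition sumL {A : Type} (l : list A) (g : A -> R) : R := fold_right Rplus 0 (map g l).

Lemma sumL_app {A} (l1 l2 : list A) g : sumL (l1 ++ l2) g = sumL l1 g + sumL l2 g.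
Proof. unfold sumL; induction l1; simpl; [lra|rewrite IHl1; lra]. Qed.

Lemma sumL_flat_map {A B} (f : A -> list B) l g :
  sumL (flat_map f l) g = sumL l (fun x => sumL (f x) g).
Proof. induction l; simpl; [reflexivity|]. rewrite sumL_app. unfold sumL in *; simpl; rewrite IHl; reflexivity. Qed.

Lemma sumL_perm {A} (l1 l2 : list A) g : Permutation l1 l2 -> sumL l1 g = sumL l2 g.
Proof. unfold sumL; induction 1; simpl; lra. Qed.

Lemma sumL_ext_in {A} (l : list A) g h : (forall x, In x l -> g x = h x) -> sumL l g = sumL l h.
Proof. unfold sumL; induction l; simpl; intros H; [reflexivity|]. rewrite H, IHl; auto. Qed.

Lemma sumL_const {A} (l : list A) c : sumL l (fun _ => c) = INR (length l) * c.
Proof. unfold sumL; induction l; simpl length; [simpl; lra|]. rewrite S_INR. simpl. rewrite IHl. lra. Qed.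

Lemma sumL_scal {A} (l : list A) c g : sumL l (fun x => c * g x) = c * sumL l g.
Proof. unfold sumL; induction l; simpl; [lra|]. rewrite IHl; lra. Qed.

Lemma sumL_le {A} (l : list A) g h : (forall x, In x l -> g x <= h x) -> sumL l g <= sumL l h.
Proof. unfold sumL; induction l; simpl; intros H; [lra|]. apply Rplus_le_compat; auto. Qed.

Lemma sumL_pos {A} (l : list A) g : l <> [] -> (forall x, In x l -> 0 < g x) -> 0 < sumL l g.
Proof.
  unfold sumL; induction l as [|a l IH]; simpl; intros Hn H; [congruence|].
  destruct l. simpl. specialize (H a (or_introl eq_refl)); lra.
  assert (0 < fold_right Rplus 0 (map g (a0 :: l))) by (apply IH; [congruence| auto]).
  specialize (H a (or_introl eq_refl)); lra.
Qed.

Definition isNode (t : tree) : Prop := exists a b, t = Node a b.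

Lemma leaves_pos t : (1 <= leaves t)%nat.
Proof. induction t; simpl; lia. Qed.

Lemma gen_trees_in fuel : forall n t, (n <= fuel)%nat ->
  (In t (gen_trees fuel n) <-> leaves t = n /\ (1 <= n)%nat).
Proof.
  induction fuel as [|f IH]; intros n t Hn.
  - simpl. split; [tauto|]. lia.
  - simpl. destruct (Nat.eqb_spec n 1) as [->|Hn1].
    + simpl. split.
      * intros [<-|[]]. simpl; lia.
      * intros [Hl _]. left. destruct t; simpl in *; auto. pose proof (leaves_pos t1); pose proof (leaves_pos t2); lia.
    + rewrite in_flat_map. split.
      * intros [k [Hk Ht]]. apply in_seq in Hk. rewrite in_flat_map in Ht.
        destruct Ht as [a [Ha Ht]]. apply in_map_iff in Ht as [b [<- Hb]].
        apply IH in Ha; [|lia]. apply IH in Hb; [|lia]. simpl. lia.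
      * intros [Hl H1]. destruct t as [|a b]; simpl in Hl; [lia|].
        pose proof (leaves_pos a); pose proof (leaves_pos b).
        exists (leaves a). split; [apply in_seq; lia|].
        apply in_flat_map. exists a. split; [apply IH; lia|].
        apply in_map. apply IH; lia.
Qed.

Lemma gen_trees_sound fuel : forall n t, In t (gen_trees fuel n) -> leaves t = n.
Proof.
  induction fuel as [|f IH]; intros n t; simpl; [tauto|].
  destruct (Nat.eqb_spec n 1) as [->|Hn1].
  - intros [<-|[]]; reflexivity.
  - rewrite in_flat_map. intros [k [Hk Ht]]. apply in_seq in Hk. rewrite in_flat_map in Ht.
    destruct Ht as [a [Ha Ht]]. apply in_map_iff in Ht as [b [<- Hb]].
    apply IH in Ha. apply IH in Hb. simpl. lia.
Qed.

Lemma gen_trees_nodup fuel : forall n, NoDup (gen_trees fuel n).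
Proof.
  induction fuel as [|f IH]; intros n; simpl; [constructor|].
  destruct (Nat.eqb n 1). repeat constructor; auto.
  apply NoDup_flat_map_gen. apply seq_NoDup.
  - intros k Hk. apply in_seq in Hk. apply NoDup_flat_map_gen; auto.
    + intros a _. apply FinFun.Injective_map_NoDup; auto. intros x y H; inversion H; auto.
    + intros a a' z _ _ H1 H2. apply in_map_iff in H1 as [b [<- _]]. apply in_map_iff in H2 as [b' [H _]]. inversion H; auto.
  - intros k k' z Hk Hk' H1 H2. apply in_seq in Hk; apply in_seq in Hk'.
    apply in_flat_map in H1 as [a [Ha H1]]. apply in_map_iff in H1 as [b [<- Hb]].
    apply in_flat_map in H2 as [a' [Ha' H2]]. apply in_map_iff in H2 as [b' [H Hb']].
    inversion H; subst. apply gen_trees_sound in Ha. apply gen_trees_sound in Ha'. lia.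
Qed.

Lemma Omega_in n t : In t (Omega n) <-> leaves t = n /\ (1 <= n)%nat.
Proof. apply gen_trees_in; lia. Qed.

Lemma Omega_nodup n : NoDup (Omega n).
Proof. apply gen_trees_nodup. Qed.

Open Scope R_scope.

Fixpoint prune (t : tree) : tree :=
  match t with
  | Leaf => Leaf
  | Node a b =>
      match a, b with
      | Leaf, Leaf => Leaf
      | Leaf, _ => prune b
      | _, Leaf => prune a
      | _, _ => Node (prune a) (prune b)
      end
  end.

Lemma strahler_pos t : (1 <= strahler t)%nat.
Proof. induction t; simpl; auto. destruct (Nat.eqb_spec (strahler t1) (strahler t2)); lia. Qed.

Lemma strahler_node a b : (2 <= strahler (Node a b))%nat.
Proof.
  simpl. pose proof (strahler_pos a). pose proof (strahler_pos b).
  destruct (Nat.eqb_spec (strahler a) (strahler b)); lia.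
Qed.

Lemma eqb_S x r : (1 <= x)%nat -> Nat.eqb x (S r) = Nat.eqb (x - 1) r.
Proof. intros H. destruct (Nat.eqb_spec x (S r)); destruct (Nat.eqb_spec (x-1) r); auto; lia. Qed.

Lemma prune_main r : (1 <= r)%nat -> forall t, t <> Leaf ->
  strahler (prune t) = (strahler t - 1)%nat /\
  inner_tops (S r) t = inner_tops r (prune t).
Proof.
  intros Hr t. induction t as [|a IHa b IHb]; intros Ht; [congruence|].
  destruct a as [|a1 a2]; destruct b as [|b1 b2].
  - simpl. split; [reflexivity|]. destruct r; [lia|]. reflexivity.
  - destruct (IHb ltac:(congruence)) as [H1 H2].
    pose proof (strahler_node b1 b2) as Hb.
    change (prune (Node Leaf (Node b1 b2))) with (prune (Node b1 b2)).
    remember (Node b1 b2) as b. clear Heqb IHa IHb.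
    cbn [strahler inner_tops]. rewrite <- H2.
    destruct (Nat.eqb_spec 1 (strahler b)); [lia|].
    rewrite H1. replace (Nat.max 1 (strahler b)) with (strahler b) by lia.
    destruct r; [lia|]. split; [reflexivity|]. destruct (strahler b =? S (S r)); simpl; lia.
  - destruct (IHa ltac:(congruence)) as [H1 H2].
    pose proof (strahler_node a1 a2) as Ha.
    change (prune (Node (Node a1 a2) Leaf)) with (prune (Node a1 a2)).
    remember (Node a1 a2) as a. clear Heqa IHa IHb.
    cbn [strahler inner_tops]. rewrite <- H2.
    destruct (Nat.eqb_spec (strahler a) 1); [lia|].
    rewrite H1. replace (Nat.max (strahler a) 1) with (strahler a) by lia.
    destruct r; [lia|]. split; [reflexivity|]. destruct (strahler a =? S (S r)); simpl; lia.
  - destruct (IHa ltac:(congruence)) as [H1 H2].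
    destruct (IHb ltac:(congruence)) as [H3 H4].
    pose proof (strahler_node a1 a2) as Ha.
    pose proof (strahler_node b1 b2) as Hb.
    change (prune (Node (Node a1 a2) (Node b1 b2))) with (Node (prune (Node a1 a2)) (prune (Node b1 b2))).
    remember (Node a1 a2) as a. remember (Node b1 b2) as b. clear Heqa Heqb IHa IHb.
    cbn [inner_tops]. rewrite <- H2, <- H4.
    assert (Hs : strahler (Node (prune a) (prune b)) = (strahler (Node a b) - 1)%nat).
    { cbn [strahler]. rewrite H1, H3.
      destruct (Nat.eqb_spec (strahler a) (strahler b));
      destruct (Nat.eqb_spec (strahler a - 1) (strahler b - 1)); lia. }
    split; [exact Hs|]. rewrite Hs, H1, H3.
    pose proof (strahler_node a b).
    rewrite (eqb_S (strahler a)), (eqb_S (strahler b)), (eqb_S (strahler (Node a b))) by lia.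
    reflexivity.
Qed.

Lemma branches_prune r t : (1 <= r)%nat -> t <> Leaf ->
  branches (S r) t = branches r (prune t).
Proof.
  intros Hr Ht. destruct (prune_main r Hr t Ht) as [H1 H2].
  unfold branches. rewrite H2, H1.
  destruct t; [congruence|]. pose proof (strahler_node t1 t2).
  rewrite eqb_S by lia. reflexivity.
Qed.

Open Scope nat_scope.

Fixpoint D (N k : nat) : nat :=
  match N, k with
  | 0, 0 => 1
  | 0, S _ => 0
  | S _, 0 => 0
  | S N', S k' => D N' k' + 2 * D N' (S k')
  end.

Definition sumN (l : list nat) (f : nat -> nat) : nat := fold_right plus 0 (map f l).

Lemma sumN_ext l f g : (forall x, In x l -> f x = g x) -> sumN l f = sumN l g.
Proof. unfold sumN; induction l; simpl; intros H; [reflexivity|]. rewrite H, IHl; auto. Qed.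

Lemma sumN_add l f g : sumN l (fun x => f x + g x) = sumN l f + sumN l g.
Proof. unfold sumN; induction l; simpl; [lia|]. rewrite IHl; lia. Qed.

Lemma sumN_mul l c f : sumN l (fun x => c * f x) = c * sumN l f.
Proof. unfold sumN; induction l; simpl; [lia|]. rewrite IHl; lia. Qed.

Lemma sumN_shift l f : sumN (map S l) f = sumN l (fun x => f (S x)).
Proof. unfold sumN; induction l; simpl; auto. Qed.

Lemma D_0_r N : D N 0 = if Nat.eqb N 0 then 1 else 0.
Proof. destruct N; reflexivity. Qed.

Lemma D_big N k : (N < k)%nat -> D N k = 0.
Proof.
  revert k; induction N; intros k Hk; destruct k; simpl; try lia.
  rewrite !IHN by lia. reflexivity.
Qed.

Definition conv a b N := sumN (seq 0 (S N)) (fun k => D k a * D (N - k) b).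

Lemma sumN_cons x l f : sumN (x :: l) f = f x + sumN l f.
Proof. reflexivity. Qed.

Lemma conv_D N : forall a b, conv a b N = D N (a + b).
Proof.
  induction N; intros a b.
  - unfold conv, sumN; simpl. destruct a, b; simpl; lia.
  - unfold conv. rewrite <- cons_seq, <- seq_shift, sumN_cons, sumN_shift.
    destruct a as [|a].
    + rewrite (sumN_ext _ _ (fun _ => 0)).
      * simpl. rewrite Nat.add_0_r. clear. unfold sumN. assert (Z : forall l, fold_right Init.Nat.add 0 (map (fun _ : nat => 0) l) = 0) by (induction l; simpl; lia). rewrite Z. lia.
      * intros x _. simpl. lia.
    + rewrite (sumN_ext _ _ (fun x => D x a * D (N - x) b + 2 * (D x (S a) * D (N - x) b))).
      * rewrite sumN_add, sumN_mul. fold (conv a b N) (conv (S a) b N). rewrite !IHN.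
        simpl. lia.
      * intros x _. simpl. lia.
Qed.

Open Scope nat_scope.

Definition chain (l : list tree) : list tree := flat_map (fun u => [Node Leaf u; Node u Leaf]) l.

Fixpoint build (core : nat -> list tree) (n : nat) : list tree :=
  match n with
  | 0 => []
  | S n' => core (S n') ++ chain (build core n')
  end.

Definition coreL (n : nat) : list tree := if Nat.eqb n 2 then [Node Leaf Leaf] else [].
Definition coreN (E1 E2 : nat -> list tree) (n : nat) : list tree :=
  flat_map (fun k => flat_map (fun a => map (Node a) (E2 (n - k))) (E1 k)) (seq 1 (n - 1)).

Fixpoint expand (s : tree) : nat -> list tree :=
  match s with
  | Leaf => build coreL
  | Node s1 s2 => build (coreN (expand s1) (expand s2))
  end.

Definition Good (s : tree) (n : nat) (t : tree) := t <> Leaf /\ leaves t = n /\ prune t = s.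

Lemma build_sound core s : (forall n t, In t (core n) -> Good s n t) ->
  forall n t, In t (build core n) -> Good s n t.
Proof.
  intros Hc n; induction n as [|n IH]; intros t; simpl; [tauto|].
  rewrite in_app_iff. intros [H|H]; [auto|].
  unfold chain in H. apply in_flat_map in H as [u [Hu H]].
  destruct (IH u Hu) as [H1 [H2 H3]].
  destruct u as [|u1 u2]; [congruence|].
  destruct H as [<-|[<-|[]]]; (split; [congruence| split; [simpl in *; lia|]]).
  - exact H3.
  - destruct u1; exact H3.
Qed.

Lemma expand_sound s : forall n t, In t (expand s n) -> Good s n t.
Proof.
  induction s as [|s1 IH1 s2 IH2]; simpl; apply build_sound; intros n t H.
  - unfold coreL in H. destruct (Nat.eqb_spec n 2); [|destruct H].
    destruct H as [<-|[]]. subst. repeat split; congruence.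
  - unfold coreN in H. apply in_flat_map in H as [k [Hk H]]. apply in_seq in Hk.
    apply in_flat_map in H as [a [Ha H]]. apply in_map_iff in H as [b [<- Hb]].
    destruct (IH1 _ _ Ha) as [A1 [A2 A3]]. destruct (IH2 _ _ Hb) as [B1 [B2 B3]].
    split; [congruence|]. split; [simpl; lia|].
    destruct a as [|a1 a2]; [congruence|]. destruct b as [|b1 b2]; [congruence|].
    change (Node (prune (Node a1 a2)) (prune (Node b1 b2)) = Node s1 s2). congruence.
Qed.

Lemma in_build core n t : In t (core (S n)) -> In t (build core (S n)).
Proof. intros H; simpl; apply in_or_app; auto. Qed.

Lemma in_build_chain core n u : In u (build core n) ->
  In (Node Leaf u) (build core (S n)) /\ In (Node u Leaf) (build core (S n)).
Proof.
  intros H; simpl; split; apply in_or_app; right; unfold chain; apply in_flat_map; exists u; simpl; auto.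
Qed.

Lemma expand_complete t : forall s n, Good s n t -> In t (expand s n).
Proof.
  induction t as [|a IHa b IHb]; intros s n [H1 [H2 H3]]; [congruence|].
  destruct a as [|a1 a2]; destruct b as [|b1 b2].
  - simpl in *. subst. apply (in_build coreL 1). simpl. auto.
  - simpl in H2. destruct n as [|n]; [lia|].
    assert (In (Node b1 b2) (expand s n)).
    { apply IHb. split; [congruence|]. split; [simpl in *; lia|]. exact H3. }
    destruct s; apply in_build_chain; exact H.
  - simpl in H2. destruct n as [|n]; [lia|].
    assert (In (Node a1 a2) (expand s n)).
    { apply IHa. split; [congruence|]. split; [simpl in *; lia|]. exact H3. }
    destruct s; apply in_build_chain; exact H.
  - change (prune (Node (Node a1 a2) (Node b1 b2))) with (Node (prune (Node a1 a2)) (prune (Node b1 b2))) in H3.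
    subst s. set (a := Node a1 a2) in *. set (b := Node b1 b2) in *.
    pose proof (leaves_pos a). pose proof (leaves_pos b).
    change (leaves a + leaves b = n) in H2.
    destruct n as [|n]; [lia|]. simpl. apply in_build.
    unfold coreN. apply in_flat_map. exists (leaves a). split; [apply in_seq; lia|].
    apply in_flat_map. exists a. split.
    + apply IHa. unfold Good. split; [unfold a; congruence|]. auto.
    + apply in_map. apply IHb. unfold Good. split; [unfold b; congruence|]. split; auto. lia.
Qed.

Lemma expand_in s n t : In t (expand s n) <-> Good s n t.
Proof. split; [apply expand_sound | apply expand_complete]. Qed.

Definition chainform (t : tree) := exists u, u <> Leaf /\ (t = Node Leaf u \/ t = Node u Leaf).

Lemma chain_nodup l : NoDup l -> (forall u, In u l -> u <> Leaf) -> NoDup (chain l).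
Proof.
  intros Hl Hu. apply NoDup_flat_map_gen; auto.
  - intros u Hin. specialize (Hu u Hin). constructor; [|repeat constructor; simpl; tauto].
    simpl. intros [H|[]]. inversion H; subst; auto.
  - intros x y z _ _ [<-|[<-|[]]] [H|[H|[]]]; inversion H; subst; auto.
Qed.

Lemma chain_in l t : In t (chain l) -> (forall u, In u l -> u <> Leaf) -> chainform t.
Proof.
  unfold chain; intros H Hu. apply in_flat_map in H as [u [Hin H]].
  exists u. split; [auto|]. destruct H as [<-|[<-|[]]]; auto.
Qed.

Lemma build_nodup core s : (forall n, NoDup (core n)) ->
  (forall n t, In t (core n) -> ~ chainform t) ->
  (forall n t, In t (build core n) -> Good s n t) ->
  forall n, NoDup (build core n).
Proof.
  intros Hc Hf Hs n. induction n as [|n IH]; simpl; [constructor|].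
  apply NoDup_app; auto.
  - apply chain_nodup; auto. intros u Hu. apply (Hs n u Hu).
  - intros t H1 H2. apply (Hf _ _ H1). apply (chain_in _ _ H2). intros u Hu. apply (Hs n u Hu).
Qed.

Lemma expand_nodup s : forall n, NoDup (expand s n).
Proof.
  induction s as [|s1 IH1 s2 IH2]; simpl.
  - apply build_nodup with (s := Leaf).
    + intros n. unfold coreL. destruct (n =? 2); repeat constructor; simpl; tauto.
    + intros n t H [u [Hu [E|E]]]; unfold coreL in H; destruct (n =? 2); simpl in H; try tauto;
        destruct H as [<-|[]]; inversion E; subst; congruence.
    + apply (expand_sound Leaf).
  - apply build_nodup with (s := Node s1 s2).
    + intros n. unfold coreN. apply NoDup_flat_map_gen. apply seq_NoDup.
      * intros k _. apply NoDup_flat_map_gen; auto.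
        -- intros a _. apply FinFun.Injective_map_NoDup; auto. intros x y H; inversion H; auto.
        -- intros a a' z _ _ H1 H2. apply in_map_iff in H1 as [b [<- _]]. apply in_map_iff in H2 as [b' [H _]]. inversion H; auto.
      * intros k k' z Hk Hk' H1 H2.
        apply in_flat_map in H1 as [a [Ha H1]]. apply in_map_iff in H1 as [b [<- Hb]].
        apply in_flat_map in H2 as [a' [Ha' H2]]. apply in_map_iff in H2 as [b' [H Hb']].
        inversion H; subst. apply expand_sound in Ha. apply expand_sound in Ha'.
        destruct Ha as [_ [Ha _]]. destruct Ha' as [_ [Ha' _]]. lia.
    + intros n t H [u [Hu [E|E]]]; unfold coreN in H;
        apply in_flat_map in H as [k [Hk H]];
        apply in_flat_map in H as [a [Ha H]]; apply in_map_iff in H as [b [<- Hb]];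
        inversion E; subst.
      * apply expand_sound in Ha. destruct Ha; congruence.
      * apply expand_sound in Hb. destruct Hb; congruence.
    + apply (expand_sound (Node s1 s2)).
Qed.

Definition cnt (n m : nat) : nat :=
  match n with 0 => 0 | S N => D N (2 * m - 1) end.

Lemma length_chain l : length (chain l) = 2 * length l.
Proof. unfold chain; induction l; simpl; auto. rewrite IHl. lia. Qed.

Lemma length_flat_map {B} (f : nat -> list B) l :
  length (flat_map f l) = sumN l (fun x => length (f x)).
Proof. induction l; simpl; auto. rewrite length_app, IHl. reflexivity. Qed.

Lemma length_flat_map_const (l L : list tree) :
  length (flat_map (fun a => map (Node a) L) l) = length l * length L.
Proof. induction l; simpl; auto. rewrite length_app, length_map, IHl. lia. Qed.

Lemma expand_length s : forall n, length (expand s n) = cnt n (leaves s).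
Proof.
  induction s as [|s1 IH1 s2 IH2]; intros n.
  - simpl. induction n as [|n IH]; [reflexivity|].
    simpl build. rewrite length_app, length_chain, IH.
    unfold coreL. destruct n as [|[|n]]; simpl; try reflexivity; lia.
  - change (expand (Node s1 s2) n) with (build (coreN (expand s1) (expand s2)) n).
    pose proof (leaves_pos s1) as P1. pose proof (leaves_pos s2) as P2.
    change (leaves (Node s1 s2)) with (leaves s1 + leaves s2).
    induction n as [|n IH]; [reflexivity|].
    simpl build. rewrite length_app, length_chain, IH.
    unfold coreN. rewrite length_flat_map.
    destruct n as [|N].
    + simpl. destruct (leaves s1 + leaves s2 + (leaves s1 + leaves s2 + 0) - 1) eqn:E; [lia|reflexivity].
    + replace (S (S N) - 1) with (S N) by lia.
      rewrite <- seq_shift, sumN_shift.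
      rewrite (sumN_ext _ _ (fun x => D x (2 * leaves s1 - 1) * D (N - x) (2 * leaves s2 - 1))).
      * fold (conv (2 * leaves s1 - 1) (2 * leaves s2 - 1) N). rewrite conv_D.
        unfold cnt. replace (2 * (leaves s1 + leaves s2) - 1) with (S (2 * leaves s1 - 1 + (2 * leaves s2 - 1))) by lia.
        simpl. lia.
      * intros x Hx. apply in_seq in Hx. rewrite length_flat_map_const, IH1.
        replace (S (S N) - S x) with (S (N - x)) by lia. rewrite IH2. reflexivity.
Qed.

Open Scope nat_scope.

Lemma leaves_prune t : leaves (prune t) <= leaves t.
Proof.
  induction t as [|a IHa b IHb]; simpl; [lia|].
  destruct a as [|a1 a2]; destruct b as [|b1 b2]; simpl in *; lia.
Qed.

Lemma decomp n : 2 <= n ->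
  Permutation (Omega n) (flat_map (fun m => flat_map (fun s => expand s n) (Omega m)) (seq 1 n)).
Proof.
  intros Hn. apply NoDup_Permutation.
  - apply Omega_nodup.
  - apply NoDup_flat_map_gen. apply seq_NoDup.
    + intros m _. apply NoDup_flat_map_gen. apply Omega_nodup.
      * intros s _. apply expand_nodup.
      * intros s s' z _ _ H1 H2. apply expand_in in H1 as [_ [_ H1]]. apply expand_in in H2 as [_ [_ H2]]. congruence.
    + intros m m' z _ _ H1 H2.
      apply in_flat_map in H1 as [s [Hs H1]]. apply in_flat_map in H2 as [s' [Hs' H2]].
      apply expand_in in H1 as [_ [_ H1]]. apply expand_in in H2 as [_ [_ H2]].
      apply Omega_in in Hs. apply Omega_in in Hs'. subst. lia.
  - intros t. rewrite Omega_in. rewrite in_flat_map. split.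
    + intros [Hl _]. exists (leaves (prune t)). split.
      * apply in_seq. pose proof (leaves_prune t). pose proof (leaves_pos (prune t)). lia.
      * apply in_flat_map. exists (prune t). split.
        -- apply Omega_in. split; auto. apply leaves_pos.
        -- apply expand_in. split; [|split; auto].
           destruct t; simpl in Hl; [lia|congruence].
    + intros [m [Hm H]]. apply in_flat_map in H as [s [_ H]]. apply expand_in in H as [_ [H _]]. lia.
Qed.

Lemma sum_prune n (g : tree -> R) : 2 <= n ->
  sumL (Omega n) (fun t => g (prune t)) =
  sumL (seq 1 n) (fun m => (INR (cnt n m) * sumL (Omega m) g)%R).
Proof.
  intros Hn. rewrite (sumL_perm _ _ _ (decomp n Hn)), sumL_flat_map.
  apply sumL_ext_in. intros m Hm. rewrite sumL_flat_map, <- sumL_scal.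
  apply sumL_ext_in. intros s Hs. apply Omega_in in Hs as [Hs _].
  rewrite (sumL_ext_in _ _ (fun _ => g s)).
  - rewrite sumL_const, expand_length, Hs. reflexivity.
  - intros t Ht. apply expand_in in Ht as [_ [_ ->]]. reflexivity.
Qed.

Open Scope nat_scope.

Fixpoint enc (t : tree) : list bool :=
  match t with Leaf => [false] | Node a b => true :: enc a ++ enc b end.

Lemma enc_app_inj t : forall t' r r', enc t ++ r = enc t' ++ r' -> t = t' /\ r = r'.
Proof.
  induction t as [|a IHa b IHb]; intros [|a' b'] r r' H; simpl in H; inversion H; auto.
  rewrite <- !app_assoc in H1. apply IHa in H1 as [-> H1]. apply IHb in H1 as [-> ->]. auto.
Qed.

Lemma enc_inj : FinFun.Injective enc.
Proof. intros x y H. apply (enc_app_inj x y [] []). rewrite !app_nil_r; auto. Qed.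

Lemma enc_length t : length (enc t) = 2 * leaves t - 1.
Proof. induction t; simpl; auto. rewrite length_app, IHt1, IHt2. pose proof (leaves_pos t1); pose proof (leaves_pos t2). lia. Qed.

Fixpoint allbits (k : nat) : list (list bool) :=
  match k with 0 => [[]] | S k => flat_map (fun l => [true :: l; false :: l]) (allbits k) end.

Lemma allbits_length k : length (allbits k) = 2 ^ k.
Proof.
  induction k; simpl; auto.
  assert (H : forall L : list (list bool), length (flat_map (fun l => [true :: l; false :: l]) L) = 2 * length L)
    by (induction L; simpl; auto; rewrite IHL; lia).
  rewrite H, IHk. lia.
Qed.

Lemma allbits_in k l : length l = k -> In l (allbits k).
Proof.
  revert l; induction k; intros l H; destruct l as [|x l]; simpl in *; try lia; auto.
  apply in_flat_map. exists l. split; [apply IHk; lia|]. destruct x; simpl; auto.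
Qed.

Lemma Omega_len_le n : length (Omega n) <= 4 ^ n.
Proof.
  rewrite <- (length_map enc).
  eapply Nat.le_trans.
  - apply (NoDup_incl_length (l' := allbits (2 * n - 1))).
    + apply FinFun.Injective_map_NoDup; [apply enc_inj | apply Omega_nodup].
    + intros x Hx. apply in_map_iff in Hx as [t [<- Ht]]. apply Omega_in in Ht as [Ht _].
      apply allbits_in. rewrite enc_length. lia.
  - rewrite allbits_length. replace 4 with (2 ^ 2) by reflexivity. rewrite <- Nat.pow_mul_r.
    apply Nat.pow_le_mono_r; lia.
Qed.

Fixpoint comb (n : nat) : tree :=
  match n with 0 => Leaf | 1 => Leaf | S k => Node Leaf (comb k) end.

Lemma comb_leaves n : 1 <= n -> leaves (comb n) = n.
Proof. induction n as [|[|n] IH]; intros H; simpl; try lia. simpl in IH. rewrite IH; lia. Qed.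

Lemma Omega_nonempty n : 1 <= n -> Omega n <> [].
Proof. intros H E. assert (In (comb n) (Omega n)) by (apply Omega_in; split; [apply comb_leaves|]; auto). rewrite E in H0; destruct H0. Qed.

Open Scope R_scope.

Lemma sumL_plus {T} (l : list T) f g : sumL l (fun x => f x + g x) = sumL l f + sumL l g.
Proof. unfold sumL; induction l; simpl; [lra|]. rewrite IHl; lra. Qed.

Lemma sumL_mapS (l : list nat) f : sumL (map S l) f = sumL l (fun m => f (S m)).
Proof. unfold sumL; rewrite map_map; reflexivity. Qed.

Lemma sumL_nonneg {T} (l : list T) f : (forall x, In x l -> 0 <= f x) -> 0 <= sumL l f.
Proof. unfold sumL; induction l; simpl; intros H; [lra|]. pose proof (H a (or_introl eq_refl)). pose proof (IHl (fun x Hx => H x (or_intror Hx))). lra. Qed.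

Definition Aodd (y : R) (N : nat) := sumL (seq 0 (S N)) (fun m => INR (D N (2 * m + 1)) * y ^ (2 * m + 1)).
Definition Bev (y : R) (N : nat) := sumL (seq 0 (S N)) (fun m => INR (D N (2 * m)) * y ^ (2 * m)).

Lemma Aodd_nonneg y (ypos : 0 < y) N : 0 <= Aodd y N.
Proof. apply sumL_nonneg. intros. apply Rmult_le_pos; [apply pos_INR|]. apply pow_le; lra. Qed.
Lemma Bev_nonneg y (ypos : 0 < y) N : 0 <= Bev y N.
Proof. apply sumL_nonneg. intros. apply Rmult_le_pos; [apply pos_INR|]. apply pow_le; lra. Qed.

Lemma sumL_last n f : sumL (seq 0 (S n)) f = sumL (seq 0 n) f + f n.
Proof. rewrite seq_S, sumL_app. unfold sumL at 2. simpl. ring. Qed.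

Lemma sumL_first n f : sumL (seq 0 (S n)) f = f 0%nat + sumL (seq 0 n) (fun m => f (S m)).
Proof. rewrite <- cons_seq, <- seq_shift. unfold sumL; simpl; rewrite map_map; reflexivity. Qed.

Lemma Aodd_S y N : Aodd y (S N) = y * Bev y N + 2 * Aodd y N.
Proof.
  unfold Aodd, Bev. rewrite sumL_last.
  rewrite (D_big (S N) (2 * S N + 1)) by lia. simpl INR at 2. rewrite Rmult_0_l, Rplus_0_r.
  rewrite (sumL_ext_in _ _ (fun m => y * (INR (D N (2 * m)) * y ^ (2 * m)) + 2 * (INR (D N (2 * m + 1)) * y ^ (2 * m + 1)))).
  - rewrite sumL_plus, !sumL_scal. reflexivity.
  - intros m _. replace (2 * m + 1)%nat with (S (2 * m)) by lia. cbn [D].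
    rewrite plus_INR, mult_INR. replace (INR 2) with 2 by reflexivity.
    simpl pow. ring.
Qed.

Lemma Bev_S y N : (1 <= N)%nat -> Bev y (S N) = y * Aodd y N + 2 * Bev y N.
Proof.
  intros HN. unfold Aodd, Bev. rewrite sumL_first.
  replace (D (S N) (2 * 0)) with 0%nat by reflexivity. simpl INR at 1. rewrite Rmult_0_l, Rplus_0_l.
  rewrite (sumL_ext_in _ _ (fun m => y * (INR (D N (2 * m + 1)) * y ^ (2 * m + 1)) + 2 * (INR (D N (2 * S m)) * y ^ (2 * S m)))).
  - rewrite sumL_plus, !sumL_scal.
    pose proof (sumL_first (S N) (fun m => INR (D N (2 * m)) * y ^ (2 * m))) as E1.
    pose proof (sumL_last (S N) (fun m => INR (D N (2 * m)) * y ^ (2 * m))) as E2.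
    cbv beta in E1, E2.
    rewrite (D_big N (2 * S N)) in E2 by lia.
    destruct N as [|N']; [lia|].
    replace (D (S N') (2 * 0)) with 0%nat in E1 by reflexivity.
    rewrite INR_0 in E1, E2. rewrite Rmult_0_l, Rplus_0_l in E1. rewrite Rmult_0_l, Rplus_0_r in E2.
    rewrite <- E1, E2. ring.
  - intros m _. replace (2 * S m)%nat with (S (2 * m + 1)) by lia. cbn [D].
    rewrite plus_INR, mult_INR. replace (INR 2) with 2 by reflexivity. simpl pow. ring.
Qed.

Lemma S_val y N : (1 <= N)%nat -> Aodd y N + Bev y N = y * (2 + y) ^ (N - 1).
Proof.
  induction N as [|N IH]; intros HN; [lia|].
  destruct N as [|N].
  - unfold Aodd, Bev, sumL. simpl. ring.
  - rewrite Aodd_S, (Bev_S y (S N)) by lia. replace (S (S N) - 1)%nat with (S (S N - 1)) by lia.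
    simpl pow. replace (N - 0)%nat with (S N - 1)%nat by lia. transitivity ((2+y) * (y * (2+y)^(S N - 1))); [rewrite <- IH by lia; ring | ring].
Qed.

Lemma Aodd_up y (ypos : 0 < y) N : (1 <= N)%nat -> Aodd y N <= y * (2 + y) ^ (N - 1).
Proof. intros H. rewrite <- S_val by auto. pose proof (Bev_nonneg y ypos N). lra. Qed.

Lemma Aodd_low y (ypos : 0 < y) N : (1 <= N)%nat -> Rmin y 2 * (y * (2 + y) ^ (N - 1)) <= Aodd y (S N).
Proof.
  intros H. rewrite <- S_val by auto. rewrite Aodd_S.
  pose proof (Aodd_nonneg y ypos N). pose proof (Bev_nonneg y ypos N).
  unfold Rmin. destruct (Rle_dec y 2); nra.
Qed.

Definition Pn (n : nat) (h : R) : R := sumL (seq 1 n) (fun m => INR (cnt n m) * exp (INR m * h)).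

Lemma exp_pow_half k h : exp (INR k * h) = exp (h / 2) ^ (2 * k).
Proof.
  rewrite pow_mult. replace (exp (h/2) ^ 2) with (exp h).
  - induction k.
    + simpl. rewrite Rmult_0_l, exp_0. reflexivity.
    + rewrite S_INR, Rmult_plus_distr_r, Rmult_1_l, exp_plus, IHk. simpl. ring.
  - simpl. rewrite Rmult_1_r, <- exp_plus. f_equal. field.
Qed.

Lemma Pn_A n h : (1 <= n)%nat -> Pn n h = exp (h / 2) * Aodd (exp (h / 2)) (n - 1).
Proof.
  intros Hn. unfold Pn, Aodd. destruct n as [|N]; [lia|]. replace (S N - 1)%nat with N by lia.
  rewrite <- seq_shift, sumL_mapS, <- sumL_scal. apply sumL_ext_in. intros m _.
  unfold cnt. replace (2 * S m - 1)%nat with (2 * m + 1)%nat by lia.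
  rewrite exp_pow_half. replace (2 * S m)%nat with (S (2 * m + 1)) by lia. simpl pow. ring.
Qed.

Open Scope R_scope.

Lemma ln_le' x y : 0 < x -> x <= y -> ln x <= ln y.
Proof. intros Hx [H|H]; [left; apply ln_increasing; auto| subst; lra]. Qed.

Lemma exp_le' x y : x <= y -> exp x <= exp y.
Proof. intros [H|H]; [left; apply exp_increasing; auto| subst; lra]. Qed.

Lemma exp_INR_ln n x : 0 < x -> exp (INR n * ln x) = x ^ n.
Proof. intros Hx. rewrite <- Rpower_pow by auto. reflexivity. Qed.

Definition Fm (g : R) : R := ln (2 + exp (g / 2)).

Lemma Fm_lip g e : 0 <= e -> Fm (g + e) <= Fm g + e / 2.
Proof.
  intros He. unfold Fm.
  rewrite <- (ln_exp (e/2)). rewrite <- ln_mult by (pose proof (exp_pos (g/2)); pose proof (exp_pos (e/2)); lra).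
  apply ln_le'. pose proof (exp_pos ((g+e)/2)); lra.
  replace ((g + e) / 2) with (g/2 + e/2) by field. rewrite exp_plus.
  assert (1 <= exp (e/2)) by (rewrite <- exp_0; apply exp_le'; lra).
  pose proof (exp_pos (g/2)). nra.
Qed.

Lemma Fm_mono g e : 0 <= e -> Fm g <= Fm (g + e).
Proof.
  intros He. unfold Fm. apply ln_le'. pose proof (exp_pos (g/2)); lra.
  assert (exp (g/2) <= exp ((g+e)/2)) by (apply exp_le'; lra). lra.
Qed.

Definition lowrate (a : nat -> R) (l : R) :=
  forall e, 0 < e -> exists c, 0 < c /\ forall n, (1 <= n)%nat -> c * exp (INR n * (l - e)) <= a n.
Definition uprate (a : nat -> R) (l : R) :=
  forall e, 0 < e -> exists C, 0 < C /\ forall n, (1 <= n)%nat -> a n <= C * exp (INR n * (l + e)).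

Lemma ext_low (a w : nat -> R) : (forall n, (1 <= n)%nat -> 0 < a n) -> (forall n, 0 < w n) ->
  forall k, (exists c, 0 < c /\ forall n, (k + 1 <= n)%nat -> c * w n <= a n) ->
  exists c, 0 < c /\ forall n, (1 <= n)%nat -> c * w n <= a n.
Proof.
  intros Ha Hw k. induction k as [|k IH]; intros [c [Hc H]]; [exists c; split; auto; intros n0 Hn0; apply H; lia|].
  apply IH. exists (Rmin c (a (S k) / w (S k))). split.
  - apply Rmin_glb_lt; auto. apply Rdiv_lt_0_compat; auto. apply Ha; lia.
  - intros n Hn. destruct (Nat.eq_dec n (S k)) as [->|Hne].
    + apply Rle_trans with (a (S k) / w (S k) * w (S k)).
      * apply Rmult_le_compat_r; [left; auto|apply Rmin_r].
      * right. field. apply Rgt_not_eq, Hw.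
    + apply Rle_trans with (c * w n); [|apply H; lia].
      apply Rmult_le_compat_r; [left; auto|apply Rmin_l].
Qed.

Lemma ext_up (a w : nat -> R) : (forall n, 0 < w n) ->
  forall k, (exists C, 0 < C /\ forall n, (k + 1 <= n)%nat -> a n <= C * w n) ->
  exists C, 0 < C /\ forall n, (1 <= n)%nat -> a n <= C * w n.
Proof.
  intros Hw k. induction k as [|k IH]; intros [C [Hc H]]; [exists C; split; auto; intros n0 Hn0; apply H; lia|].
  apply IH. exists (Rmax C (a (S k) / w (S k))). split.
  - apply Rlt_le_trans with C; auto. apply Rmax_l.
  - intros n Hn. destruct (Nat.eq_dec n (S k)) as [->|Hne].
    + apply Rle_trans with (a (S k) / w (S k) * w (S k)).
      * right. field. apply Rgt_not_eq, Hw.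
      * apply Rmult_le_compat_r; [left; auto|apply Rmax_r].
    + apply Rle_trans with (C * w n); [apply H; lia|].
      apply Rmult_le_compat_r; [left; auto|apply Rmax_l].
Qed.

Lemma P_bounds h : exists k K, 0 < k /\ 0 < K /\ forall n, (3 <= n)%nat ->
  k * exp (INR n * Fm h) <= Pn n h <= K * exp (INR n * Fm h).
Proof.
  set (y := exp (h / 2)). assert (Hy : 0 < y) by apply exp_pos.
  assert (Hz : 0 < 2 + y) by lra.
  assert (E : forall n, exp (INR n * Fm h) = (2 + y) ^ n) by (intros; unfold Fm; apply exp_INR_ln; auto).
  assert (Hm : 0 < Rmin y 2) by (apply Rmin_glb_lt; lra).
  exists (y * (Rmin y 2 * y) / (2 + y) ^ 3), (y * y / (2 + y) ^ 2). split; [|split; [|intros n Hn; split]].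
  - apply Rdiv_lt_0_compat; [|apply pow_lt; auto]. apply Rmult_lt_0_compat; auto. apply Rmult_lt_0_compat; auto.
  - apply Rdiv_lt_0_compat; [|apply pow_lt; auto]. apply Rmult_lt_0_compat; auto.
  - rewrite E, Pn_A by lia. fold y.
    replace (n - 1)%nat with (S (n - 2)) by lia.
    pose proof (Aodd_low y Hy (n - 2) ltac:(lia)).
    replace n with (3 + (n - 3))%nat at 1 by lia. rewrite pow_add.
    replace (n - 2 - 1)%nat with (n - 3)%nat in H by lia.
    assert (0 < (2 + y) ^ 3) by (apply pow_lt; auto).
    apply Rle_trans with (y * (Rmin y 2 * (y * (2 + y) ^ (n - 3)))).
    + right. field. lra.
    + apply Rmult_le_compat_l; lra.
  - rewrite E, Pn_A by lia. fold y.
    pose proof (Aodd_up y Hy (n - 1) ltac:(lia)).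
    replace n with (2 + (n - 2))%nat at 2 by lia. rewrite pow_add.
    replace (n - 1 - 1)%nat with (n - 2)%nat in H by lia.
    assert (0 < (2 + y) ^ 2) by (apply pow_lt; auto).
    apply Rle_trans with (y * (y * (2 + y) ^ (n - 2))).
    + apply Rmult_le_compat_l; lra.
    + right. field. lra.
Qed.

Open Scope R_scope.

Definition RecRel (a b : nat -> R) :=
  forall n, (3 <= n)%nat -> b n = sumL (seq 1 n) (fun m => INR (cnt n m) * a m).

Lemma transfer_up a b g : RecRel a b -> uprate a g -> uprate b (Fm g).
Proof.
  intros Hr Ha e He. destruct (Ha e He) as [C [HC Hb]].
  destruct (P_bounds (g + e)) as [k [K [Hk [HK HP]]]].
  apply (ext_up b (fun n => exp (INR n * (Fm g + e)))) with (k := 2%nat); [intros; apply exp_pos|].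
  exists (C * K). split; [apply Rmult_lt_0_compat; auto|].
  intros n Hn. rewrite Hr by lia.
  apply Rle_trans with (C * Pn n (g + e)).
  - unfold Pn. rewrite <- sumL_scal. apply sumL_le. intros m Hm. apply in_seq in Hm.
    rewrite <- Rmult_assoc, (Rmult_comm C), Rmult_assoc. apply Rmult_le_compat_l; [apply pos_INR|].
    apply Hb; lia.
  - rewrite Rmult_assoc. apply Rmult_le_compat_l; [lra|].
    apply Rle_trans with (K * exp (INR n * Fm (g + e))); [apply HP; lia|].
    apply Rmult_le_compat_l; [lra|]. apply exp_le'. apply Rmult_le_compat_l; [apply pos_INR|].
    pose proof (Fm_lip g e ltac:(lra)). lra.
Qed.

Lemma transfer_low a b g : RecRel a b -> (forall n, (1 <= n)%nat -> 0 < b n) ->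
  lowrate a g -> lowrate b (Fm g).
Proof.
  intros Hr Hbp Ha e He. destruct (Ha e He) as [c [Hc Hb]].
  destruct (P_bounds (g - e)) as [k [K [Hk [HK HP]]]].
  apply (ext_low b (fun n => exp (INR n * (Fm g - e)))) with (k := 2%nat); auto; [intros; apply exp_pos|].
  exists (c * k). split; [apply Rmult_lt_0_compat; auto|].
  intros n Hn. rewrite Hr by lia.
  apply Rle_trans with (c * Pn n (g - e)).
  - rewrite Rmult_assoc. apply Rmult_le_compat_l; [lra|].
    apply Rle_trans with (k * exp (INR n * Fm (g - e))); [|apply HP; lia].
    apply Rmult_le_compat_l; [lra|]. apply exp_le'. apply Rmult_le_compat_l; [apply pos_INR|].
    pose proof (Fm_lip (g - e) e ltac:(lra)). replace (g - e + e) with g in H by ring. lra.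
  - unfold Pn. rewrite <- sumL_scal. apply sumL_le. intros m Hm. apply in_seq in Hm.
    rewrite <- Rmult_assoc, (Rmult_comm c), Rmult_assoc. apply Rmult_le_compat_l; [apply pos_INR|].
    apply Hb; lia.
Qed.

Open Scope R_scope.

Definition Lc (n : nat) : R := INR (length (Omega n)).

Lemma Lc_pos n : (1 <= n)%nat -> 1 <= Lc n.
Proof.
  intros Hn. unfold Lc. pose proof (Omega_nonempty n Hn).
  destruct (Omega n); [congruence|]. simpl length. rewrite S_INR. pose proof (pos_INR (length l)). lra.
Qed.

Lemma Lc_rec : RecRel Lc Lc.
Proof.
  intros n Hn. pose proof (sum_prune n (fun _ => 1) ltac:(lia)) as E. cbv beta in E.
  unfold Lc. rewrite sumL_const, Rmult_1_r in E. rewrite E.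
  apply sumL_ext_in. intros m _. rewrite sumL_const, Rmult_1_r. reflexivity.
Qed.

Lemma ln4_pos : 0 < ln 4.
Proof. rewrite <- ln_1. apply ln_increasing; lra. Qed.

Lemma Lc_up : uprate Lc (ln 4).
Proof.
  intros e He. exists 1. split; [lra|]. intros n Hn. rewrite Rmult_1_l.
  apply Rle_trans with (exp (INR n * ln 4)).
  - rewrite exp_INR_ln by lra. unfold Lc. replace 4 with (INR 4) by (simpl; lra).
    rewrite <- pow_INR. apply le_INR. apply Omega_len_le.
  - apply exp_le'. apply Rmult_le_compat_l; [apply pos_INR|lra].
Qed.

Lemma lowrate_mono a l l' : l' <= l -> lowrate a l -> lowrate a l'.
Proof.
  intros Hl H e He. destruct (H e He) as [c [Hc Hb]]. exists c. split; auto.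
  intros n Hn. eapply Rle_trans; [|apply Hb; auto]. apply Rmult_le_compat_l; [lra|].
  apply exp_le'. apply Rmult_le_compat_l; [apply pos_INR|lra].
Qed.

Lemma Lc_low0 : lowrate Lc 0.
Proof.
  intros e He. exists 1. split; [lra|]. intros n Hn. rewrite Rmult_1_l.
  apply Rle_trans with 1; [|apply Lc_pos; auto].
  rewrite <- exp_0. apply exp_le'. pose proof (pos_INR n). nra.
Qed.

Lemma Lc_pos' n : (1 <= n)%nat -> 0 < Lc n.
Proof. intros H; pose proof (Lc_pos n H); lra. Qed.

Lemma Fm_ln4 : Fm (ln 4) = ln 4.
Proof.
  unfold Fm. replace (ln 4 / 2) with (ln 2).
  - rewrite exp_ln by lra. f_equal; lra.
  - replace 4 with (2 * 2) by lra. rewrite ln_mult by lra. field.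
Qed.

Lemma iter_defect k : ln 4 - ln 4 * (/2) ^ k <= Nat.iter k Fm 0 <= ln 4.
Proof.
  induction k as [|k IH].
  - simpl. pose proof ln4_pos. lra.
  - simpl Nat.iter. set (g := Nat.iter k Fm 0) in *. destruct IH as [H1 H2].
    pose proof (Fm_mono g (ln 4 - g) ltac:(lra)) as M. replace (g + (ln 4 - g)) with (ln 4) in M by ring.
    pose proof (Fm_lip g (ln 4 - g) ltac:(lra)) as L. replace (g + (ln 4 - g)) with (ln 4) in L by ring.
    rewrite Fm_ln4 in M, L. simpl pow. split; lra.
Qed.

Lemma Lc_low : lowrate Lc (ln 4).
Proof.
  assert (Hit : forall k, lowrate Lc (Nat.iter k Fm 0)).
  { induction k; [apply Lc_low0|]. simpl. apply (transfer_low Lc Lc); auto using Lc_rec, Lc_pos'. }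
  intros e He.
  destruct (pow_lt_1_zero (/2) ltac:(rewrite Rabs_pos_eq; lra) (e / (2 * ln 4))) as [k Hk].
  { apply Rdiv_lt_0_compat; auto. pose proof ln4_pos; lra. }
  specialize (Hk k (le_n k)). rewrite Rabs_pos_eq in Hk by (apply pow_le; lra).
  destruct (Hit k (e / 2) ltac:(lra)) as [c [Hc Hb]]. exists c. split; auto.
  intros n Hn. eapply Rle_trans; [|apply Hb; auto]. apply Rmult_le_compat_l; [lra|].
  apply exp_le'. apply Rmult_le_compat_l; [apply pos_INR|].
  pose proof (iter_defect k). pose proof ln4_pos.
  assert (ln 4 * (/ 2) ^ k <= e / 2).
  { apply Rlt_le. apply Rmult_lt_compat_l with (r := ln 4) in Hk; auto.
    replace (ln 4 * (e / (2 * ln 4))) with (e / 2) in Hk by (field; lra). lra. }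
  lra.
Qed.

Open Scope R_scope.

Lemma branches1 t : branches 1 t = leaves t.
Proof.
  induction t as [|a IHa b IHb]; [reflexivity|].
  unfold branches in *. pose proof (strahler_node a b) as Hs.
  replace (strahler (Node a b) =? 1)%nat with false by (symmetry; apply Nat.eqb_neq; lia).
  cbn [inner_tops leaves]. set (p := strahler (Node a b)) in *.
  replace (p =? 1)%nat with false by (symmetry; apply Nat.eqb_neq; lia).
  simpl negb. rewrite !Bool.andb_true_r. unfold branches in IHa, IHb. destruct (strahler a =? 1)%nat, (strahler b =? 1)%nat; unfold Defs.ind in *; lia.
Qed.

Definition Z (xi : R) (k n : nat) : R := sumL (Omega n) (fun t => exp (xi * INR (branches (S k) t))).

Lemma Z_pos xi k n : (1 <= n)%nat -> 0 < Z xi k n.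
Proof. intros H. apply sumL_pos; [apply Omega_nonempty; auto|]. intros; apply exp_pos. Qed.

Lemma Z_rec xi k : RecRel (Z xi k) (Z xi (S k)).
Proof.
  intros n Hn. unfold Z at 1.
  rewrite (sumL_ext_in _ _ (fun t => exp (xi * INR (branches (S k) (prune t))))).
  - apply (sum_prune n (fun s => exp (xi * INR (branches (S k) s)))). lia.
  - intros t Ht. apply Omega_in in Ht as [Ht _]. rewrite branches_prune; [reflexivity|lia|].
    intros ->. simpl in Ht. lia.
Qed.

Lemma Z0 xi n : (1 <= n)%nat -> Z xi 0 n = Lc n * exp (INR n * xi).
Proof.
  intros Hn. unfold Z, Lc. rewrite (sumL_ext_in _ _ (fun _ => exp (INR n * xi))).
  - apply sumL_const.
  - intros t Ht. apply Omega_in in Ht as [Ht _]. rewrite branches1, Ht. f_equal; ring.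
Qed.

Lemma Z0_up xi : uprate (Z xi 0) (ln 4 + xi).
Proof.
  intros e He. destruct (Lc_up e He) as [C [HC H]]. exists C; split; auto.
  intros n Hn. rewrite Z0 by auto.
  replace (INR n * (ln 4 + xi + e)) with (INR n * (ln 4 + e) + INR n * xi) by ring.
  rewrite exp_plus, <- Rmult_assoc. apply Rmult_le_compat_r; [left; apply exp_pos|]. auto.
Qed.

Lemma Z0_low xi : lowrate (Z xi 0) (ln 4 + xi).
Proof.
  intros e He. destruct (Lc_low e He) as [c [Hc H]]. exists c; split; auto.
  intros n Hn. rewrite Z0 by auto.
  replace (INR n * (ln 4 + xi - e)) with (INR n * (ln 4 - e) + INR n * xi) by ring.
  rewrite exp_plus, <- Rmult_assoc. apply Rmult_le_compat_r; [left; apply exp_pos|]. auto.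
Qed.

Lemma Z_rate xi k : uprate (Z xi k) (Nat.iter k Fm (ln 4 + xi)) /\ lowrate (Z xi k) (Nat.iter k Fm (ln 4 + xi)).
Proof.
  induction k as [|k [IH1 IH2]]; [split; [apply Z0_up|apply Z0_low]|].
  simpl Nat.iter. split.
  - apply (transfer_up (Z xi k)); auto using Z_rec.
  - apply (transfer_low (Z xi k)); auto using Z_rec, Z_pos.
Qed.

Lemma Fm_phi x : Fm (x + ln 4) = phi x + ln 4.
Proof.
  unfold Fm, phi, cosh.
  assert (E : ln 4 = ln 2 + ln 2) by (rewrite <- ln_mult by lra; f_equal; lra).
  replace ((x + ln 4) / 2) with (x / 2 + ln 2) by (rewrite E; field).
  rewrite exp_plus, exp_ln by lra.
  rewrite <- (ln_exp (x / 4)) at 1.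
  pose proof (exp_pos (x/4)). pose proof (exp_pos (- (x/4))). pose proof (exp_pos (x/2)).
  rewrite <- ln_mult by lra. rewrite <- ln_mult by (try apply Rmult_lt_0_compat; lra).
  f_equal.
  assert (exp (x/4) * exp (x/4) = exp (x/2)) by (rewrite <- exp_plus; f_equal; field).
  assert (exp (x/4) * exp (- (x/4)) = 1) by (rewrite <- exp_plus, <- exp_0; f_equal; ring).
  nra.
Qed.

Lemma iter_Fm_phi r x : Nat.iter r Fm (ln 4 + x) = Nat.iter r phi x + ln 4.
Proof.
  induction r; simpl; [ring|]. rewrite IHr, Fm_phi. reflexivity.
Qed.

Open Scope R_scope.

Lemma ln_bound_up z C x : 0 < z -> 0 < C -> z <= C * exp x -> ln z <= ln C + x.
Proof.
  intros Hz HC H. rewrite <- (ln_exp x). rewrite <- ln_mult by (auto; apply exp_pos).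
  apply ln_le'; auto.
Qed.

Lemma ln_bound_low z c x : 0 < c -> c * exp x <= z -> ln c + x <= ln z.
Proof.
  intros Hc H. rewrite <- (ln_exp x). rewrite <- ln_mult by (auto; apply exp_pos).
  apply ln_le'; auto. apply Rmult_lt_0_compat; auto; apply exp_pos.
Qed.

Theorem lemma2p1 (r : nat) (xi : R) (hr : (1 <= r)%nat) :
  Un_cv (fun n : nat => / INR n * ln (expect_exp xi (S r) n))
        (Nat.iter r phi xi).
Proof.
  intros eps Heps. set (d := eps / 4). assert (Hd : 0 < d) by (unfold d; lra).
  set (lam := Nat.iter r phi xi).
  destruct (Z_rate xi r) as [HU HL]. rewrite iter_Fm_phi in HU, HL. fold lam in HU, HL.
  destruct (HU d Hd) as [C1 [HC1 B1]]. destruct (HL d Hd) as [c1 [Hc1 B2]].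
  destruct (Lc_up d Hd) as [C2 [HC2 B3]]. destruct (Lc_low d Hd) as [c2 [Hc2 B4]].
  set (K := Rabs (ln C1 - ln c2) + Rabs (ln c1 - ln C2)).
  assert (HK : 0 <= K) by (unfold K; pose proof (Rabs_pos (ln C1 - ln c2)); pose proof (Rabs_pos (ln c1 - ln C2)); lra).
  destruct (archimed_cor1 (d / (K + 1)) ltac:(apply Rdiv_lt_0_compat; lra)) as [N0 [HN0 HN0p]].
  exists N0. intros n Hn. unfold R_dist.
  assert (Hn1 : (1 <= n)%nat) by lia.
  change (expect_exp xi (S r) n) with (Z xi r n / Lc n).
  pose proof (Z_pos xi r n Hn1) as Zp. pose proof (Lc_pos' n Hn1) as Lp.
  assert (Eln : ln (Z xi r n / Lc n) = ln (Z xi r n) - ln (Lc n)).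
  { unfold Rdiv. rewrite ln_mult by (auto; apply Rinv_0_lt_compat; auto). rewrite ln_Rinv by auto. ring. }
  rewrite Eln.
  pose proof (ln_bound_up _ _ _ Zp HC1 (B1 n Hn1)) as U1.
  pose proof (ln_bound_low _ _ _ Hc1 (B2 n Hn1)) as L1.
  pose proof (ln_bound_up _ _ _ Lp HC2 (B3 n Hn1)) as U2.
  pose proof (ln_bound_low _ _ _ Hc2 (B4 n Hn1)) as L2.
  set (x := INR n) in *. set (D := ln (Z xi r n) - ln (Lc n)).
  assert (Hx : 0 < x) by (unfold x; apply lt_0_INR; lia).
  set (w := / x). assert (Hw : 0 < w) by (unfold w; apply Rinv_0_lt_compat; auto).
  assert (Hwx : w * x = 1) by (unfold w; field; lra).
  assert (Hwle : w <= / INR N0).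
  { unfold w, x. apply Rinv_le_contravar; [apply lt_0_INR; lia|apply le_INR; lia]. }
  assert (HwK : w * K < d).
  { apply Rle_lt_trans with (d / (K + 1) * K).
    - apply Rmult_le_compat_r; lra.
    - apply Rmult_lt_reg_r with (K + 1); [lra|]. field_simplify; [|lra]. nra. }
  assert (DU : D <= (ln C1 - ln c2) + x * (lam + 2 * d)) by (unfold D; lra).
  assert (DL : (ln c1 - ln C2) + x * (lam - 2 * d) <= D) by (unfold D; lra).
  assert (A1 : ln C1 - ln c2 <= K) by (unfold K; pose proof (Rle_abs (ln C1 - ln c2)); pose proof (Rabs_pos (ln c1 - ln C2)); lra).
  assert (A2 : - K <= ln c1 - ln C2).
  { unfold K. pose proof (Rabs_pos (ln C1 - ln c2)). pose proof (Rle_abs (- (ln c1 - ln C2))). rewrite Rabs_Ropp in H0. lra. }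
  assert (WU : w * D <= w * K + (lam + 2 * d)).
  { apply Rle_trans with (w * ((ln C1 - ln c2) + x * (lam + 2 * d))).
    - apply Rmult_le_compat_l; lra.
    - rewrite Rmult_plus_distr_l, <- Rmult_assoc, Hwx, Rmult_1_l. apply Rplus_le_compat_r. apply Rmult_le_compat_l; lra. }
  assert (WL : - (w * K) + (lam - 2 * d) <= w * D).
  { apply Rle_trans with (w * ((ln c1 - ln C2) + x * (lam - 2 * d))).
    - rewrite Rmult_plus_distr_l, <- Rmult_assoc, Hwx, Rmult_1_l. apply Rplus_le_compat_r.
      pose proof (Rmult_le_compat_l w _ _ (Rlt_le _ _ Hw) A2). lra.
    - apply Rmult_le_compat_l; lra. }
  pose proof (Rmult_le_pos w K ltac:(lra) HK).
  assert (eps = 4 * d) by (unfold d; lra). apply Rabs_def1; lra.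
Qed.
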